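(* Let $\mathcal{U}$ be a finite set of users, each associated with a base station $b_u$, where each base station $b$ has a finite set of integer-indexed subchannels $\mathcal{C}_b$, and assume the number of users associated with each base station $b$ is at most $|\mathcal{C}_b|$. Some users are ''ongoing'', each having a previously used subchannel $\bar c_u\in\mathcal{C}_{b_u}$, where ongoing users associated with the same base station have pairwise distinct previous subchannels. For each $u$ let $\mathcal{C}^t_u=\{\bar c_u\}$ if $u$ is ongoing and $\mathcal{C}^t_u=\mathcal{C}_{b_u}$ otherwise. Call two distinct users $u,u'$ conflicting if $b_u=b_{u'}$, or if both are ongoing with $\bar c_u\neq\bar c_{u'}$. Let interference weights $i^t_{u,u'}$ satisfy $i^t_{u,u}=0$, $i^t_{u,u'}=+\infty$ for conflicting pairs, and $i^t_{u,u'}\in[0,\infty)$ otherwise. Then the problem (P3): minimize over $\boldsymbol{c}^t$ with $c^t_u\in\mathcal{C}^t_u$ for all $u$ the objective $\frac12\sum_{u,u'\in\mathcal{U}}\max\{0,1-|c^t_u-c^t_{u'}|\}\, i^t_{u,u'}$ (with $0\cdot\infty=0$), has a feasible solution with finite objective value.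
   Context: In the paper, the hypotheses on the number of users per base station and on the ongoing users are guaranteed by the preceding user-association step (which never associates more users with a base station than it has subchannels, and keeps ongoing users on their previous base station and subchannel). *)

(* Defs.v *)
From HB Require Import structures.
From mathcomp Require Import all_boot all_order all_algebra.
From mathcomp Require Import reals constructive_ereal.
Set Implicit Arguments. Unset Strict Implicit. Unset Printing Implicit Defensive.
Import Order.TTheory GRing.Theory Num.Theory.
Local Open Scope ring_scope.
Local Open Scope ereal_scope.

Section Defs.
Variables (U : finType) (B : eqType) (R : realType).
Variables (b : U -> B) (C : B -> seq int) (ongoing : U -> bool) (cbar : U -> int).

Definition Ct (u : U) : seq int := if ongoing u then [:: cbar u] else C (b u).

Definition conflicting (u u' : U) : bool :=
  (u != u') && ((b u == b u') || [&& ongoing u, ongoing u' & cbar u != cbar u']).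

(* objective of (P3); ereal product has 0 * +oo = 0 *)
Definition P3_obj (i : U -> U -> \bar R) (c : U -> int) : \bar R :=
  (2^-1)%:E * \sum_(u : U) \sum_(u' : U)
     ((Num.max 0 (1 - (`|c u - c u'|%:~R : R)))%:E * i u u').
End Defs.

(* Main.v *)
Require Import Defs.
From HB Require Import structures.
From mathcomp Require Import all_boot all_order all_algebra.
From mathcomp Require Import reals constructive_ereal.
From mathcomp Require Import zify.
Import Order.TTheory GRing.Theory Num.Theory.
Local Open Scope ring_scope.
Local Open Scope ereal_scope.

Lemma count_mem_sub (T : eqType) (s t : seq T) :
  uniq s -> uniq t -> {subset s <= t} -> count (mem s) t = size s.
Proof.
move=> us ut hsub; rewrite -size_filter; apply: perm_size.
apply: uniq_perm; first exact: filter_uniq.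
  by [].
by move=> x; rewrite mem_filter; rewrite /=; case xs: (x \in s) => //=; exact: hsub.
Qed.

Lemma count_split (T : Type) (P Q : pred T) (l : seq T) :
  count P l = (count (fun x => P x && ~~ Q x) l + count (fun x => P x && Q x) l)%N.
Proof. elim: l => //= x l ->; case: (P x); case: (Q x) => /=; lia. Qed.

Theorem lemma2 (U : finType) (B : eqType) (R : realType)
  (b : U -> B) (C : B -> seq int) (ongoing : U -> bool) (cbar : U -> int)
  (i : U -> U -> \bar R)
  (HCuniq : forall bs : B, uniq (C bs))
  (Hcard : forall bs : B, (#|[set u : U | b u == bs]| <= size (C bs))%N)
  (Hprev : forall u : U, ongoing u -> cbar u \in C (b u))
  (Hdist : forall u u' : U, u != u' -> ongoing u -> ongoing u' ->
             b u = b u' -> cbar u != cbar u')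
  (Hii : forall u : U, i u u = 0)
  (Hconf : forall u u' : U, conflicting b ongoing cbar u u' -> i u u' = +oo)
  (Hfin : forall u u' : U, u != u' -> ~~ conflicting b ongoing cbar u u' ->
            0 <= i u u' /\ i u u' \is a fin_num) :
  exists c : U -> int,
    (forall u : U, c u \in Ct b C ongoing cbar u) /\
    P3_obj i c \is a fin_num.
Proof.
pose N bs := [seq v <- enum U | (b v == bs) && ~~ ongoing v].
pose O bs := [seq v <- enum U | (b v == bs) && ongoing v].
pose F bs := [seq x <- C bs | x \notin map cbar (O bs)].
pose c u := if ongoing u then cbar u else nth 0%R (F (b u)) (index u (N (b u))).
have uO bs : uniq (map cbar (O bs)).
  rewrite map_inj_in_uniq; first by rewrite filter_uniq // enum_uniq.
  move=> u v; rewrite !mem_filter => /andP[/andP[/eqP bu ou] _] /andP[/andP[/eqP bv ov] _] e.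
  apply/eqP; apply/negPn/negP => neq.
  by move: (Hdist u v neq ou ov (etrans bu (esym bv))); rewrite e eqxx.
have sO bs : {subset map cbar (O bs) <= C bs}.
  move=> x /mapP[v]; rewrite mem_filter => /andP[/andP[/eqP <- ov] _] ->; exact: Hprev.
have szF bs : (size (N bs) <= size (F bs))%N.
  have hF : size (F bs) = (size (C bs) - size (O bs))%N.
    rewrite size_filter -(count_predC (mem (map cbar (O bs))) (C bs)).
    by rewrite count_mem_sub // size_map addKn.
  have hS : #|[set u : U | b u == bs]| = (size (N bs) + size (O bs))%N.
    rewrite cardsE cardE /enum_mem -enumT /N /O !size_filter.
    exact: (count_split _ _ ongoing).
  by rewrite hF; have := Hcard bs; rewrite hS; lia.
have inN u : ~~ ongoing u -> u \in N (b u) by move=> h; rewrite mem_filter eqxx h mem_enum.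
have cF u : ~~ ongoing u -> c u \in F (b u).
  move=> h; rewrite /c (negbTE h); apply: mem_nth.
  apply: leq_trans (szF _); by rewrite index_mem inN.
have dist u v : u != v -> b u = b v -> c u != c v.
  move=> nuv buv.
  case ou: (ongoing u); case ov: (ongoing v).
  - by rewrite /c ou ov; apply: Hdist; rewrite ?ou ?ov.
  - have := cF v (negbT ov); rewrite mem_filter => /andP[h _].
    apply: contra h => /eqP e; rewrite -e /c ou; apply/mapP; exists u => //.
    by rewrite mem_filter -buv eqxx ou mem_enum.
  - have := cF u (negbT ou); rewrite mem_filter => /andP[h _].
    apply: contra h => /eqP e; rewrite e /c ov; apply/mapP; exists v => //.
    by rewrite mem_filter buv eqxx ov mem_enum.
  - rewrite /c ou ov -buv nth_uniq ?filter_uniq ?HCuniq //.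
    + apply: contra nuv => /eqP e; apply/eqP; apply: (index_inj u _ _ e).
        by rewrite inN ?ou.
      by rewrite buv inN ?ov.
    + by apply: leq_trans (szF _); rewrite index_mem inN ?ou.
    + by apply: leq_trans (szF _); rewrite index_mem buv inN ?ov.
exists c; split.
  move=> u; rewrite /Ct; case ou: (ongoing u); first by rewrite /c ou mem_seq1.
  by have := cF u (negbT ou); rewrite mem_filter => /andP[].
rewrite /P3_obj; apply: fin_numM => //.
apply/sum_fin_numP => u _ _; apply/sum_fin_numP => v _ _.
case: (eqVneq u v) => [<-|nuv]; first by rewrite Hii mule0.
case: (boolP (conflicting b ongoing cbar u v)) => hc; last first.
  by have [_ h] := Hfin u v nuv hc; apply: fin_numM.
suff -> : (Num.max 0 (1 - (`|c u - c v|%:~R : R)))%R = 0%R by rewrite mul0e.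
have cne : c u != c v.
  move: hc; rewrite /conflicting nuv /= => /orP[/eqP|/and3P[ou ov ne]]; first exact: dist.
  by rewrite /c ou ov.
apply/max_idPl; rewrite subr_le0.
have h : (0 < `|c u - c v|)%R by rewrite normr_gt0 subr_eq0.
have h1 : (1 <= `|c u - c v|)%R by [].
by rewrite -(ler_int R) in h1.
Qed.
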